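(* Let $A$ be the adjacency matrix of a graph $G=(V,E)$ on $p$ vertices and let $d$ be the maximum vertex degree in $G$. Then $\gamma_{pd}=pd\cdot\delta+S_A$ is entanglement breaking. In particular, $t_{eb}\le pd$.
   Context: $A=(a_{i,j})$ is a self-adjoint $p\times p$ matrix with entries in $\{0,1\}$ and zero diagonal; $G$ is the simple graph with $(i,j)$ an edge iff $a_{i,j}=1$. $S_A: M_p\to M_p$ is the Schur product map $S_A(B)=(a_{i,j}b_{i,j})$. $tr(X)=\frac1p\mathrm{Tr}(X)$, $\delta(X)=tr(X)I_p$, and $\gamma_t=t\delta+S_A$ for real $t$. A map $\phi: M_p\to M_p$ is entanglement breaking if it can be written as $\phi(X)=\sum_k v_k w_k^*Xw_kv_k^*$ for finitely many vectors $w_k,v_k\in\mathbb{C}^p$. $t_{eb}=\min\{t:\gamma_t\text{ is entanglement breaking}\}$. *)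

(* Defs.v *)
(* Complex scalars: an arbitrary numClosedFieldType C
   (e.g. the complex numbers). *)
From HB Require Import structures.
From mathcomp Require Import all_boot all_order all_algebra.
Set Implicit Arguments. Unset Strict Implicit. Unset Printing Implicit Defensive.
Import Order.TTheory GRing.Theory Num.Theory.
Local Open Scope ring_scope.

Definition adjmx (C : numClosedFieldType) m n (M : 'M[C]_(m, n)) : 'M[C]_(n, m) :=
  (map_mx Num.conj M)^T.

Definition ntr (C : numClosedFieldType) p (X : 'M[C]_p) : C := \tr X / p%:R.

Definition deltamap (C : numClosedFieldType) p (X : 'M[C]_p) : 'M[C]_p :=
  (ntr X)%:M.

Definition schur (C : numClosedFieldType) p (A B : 'M[C]_p) : 'M[C]_p :=
  \matrix_(i, j) (A i j * B i j).

Definition gammamap (C : numClosedFieldType) p (A : 'M[C]_p) (t : C)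
  (X : 'M[C]_p) : 'M[C]_p := t *: deltamap X + schur A X.

Definition entanglement_breaking (C : numClosedFieldType) p
  (phi : 'M[C]_p -> 'M[C]_p) : Prop :=
  exists (n : nat) (v w : 'I_n -> 'cV[C]_p),
    forall X : 'M[C]_p,
      phi X = \sum_(k < n) (v k *m adjmx (w k) *m X *m w k *m adjmx (v k)).

Definition adjacency_matrix (C : numClosedFieldType) p (A : 'M[C]_p) : Prop :=
  [/\ forall i j, A i j = 0 \/ A i j = 1, adjmx A = A & forall i, A i i = 0].

Definition vdegree (C : numClosedFieldType) p (A : 'M[C]_p) (i : 'I_p) : nat :=
  #|[set j | A i j == 1]|.

Definition maxdegree (C : numClosedFieldType) p (A : 'M[C]_p) : nat :=
  \max_(i < p) vdegree A i.

(* Main.v *)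
Require Import Defs.
From HB Require Import structures.
From mathcomp Require Import all_boot all_order all_algebra.
From mathcomp Require Import ring.
Import Order.TTheory GRing.Theory Num.Theory.
Local Open Scope ring_scope.

Section S.
Variable C : numClosedFieldType.
Variable p : nat.
Local Notation dl x y := ((x == y)%:R : C).

Lemma term_entry (v w : 'cV[C]_p) (X : 'M[C]_p) i j :
  (v *m adjmx w *m X *m w *m adjmx v) i j =
  (\sum_x \sum_y (w x 0)^* * X x y * w y 0) * (v i 0 * (v j 0)^*).
Proof.
rewrite !mxE big_ord1 !mxE.
rewrite (eq_bigr (fun y => \sum_x v i 0 * ((w x 0)^* * X x y * w y 0))); last first.
  move=> y _; rewrite !mxE mulr_suml; apply: eq_bigr => x _; rewrite !mxE big_ord1 !mxE.
  by rewrite !mulrA.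
rewrite exchange_big /= [RHS]mulrA; congr (_ * _).
rewrite mulr_suml; apply: eq_bigr => x _.
rewrite mulr_suml; apply: eq_bigr => y _.
by rewrite mulrC.
Qed.

Lemma sum_dl (F : 'I_p -> C) a : \sum_x dl x a * F x = F a.
Proof.
rewrite (bigD1 a) //= eqxx mul1r big1 ?addr0 // => x /negbTE ->; by rewrite mul0r.
Qed.

Lemma sum_dl' (F : 'I_p -> C) a : \sum_x F x * dl x a = F a.
Proof. rewrite -(sum_dl F a); apply: eq_bigr => x _; exact: mulrC. Qed.

Definition vec (a : 'I_p) (al : C) (b : 'I_p) : 'cV[C]_p :=
  \col_x (dl x a + al * dl x b).

Lemma conj_dl (x y : 'I_p) : (dl x y)^* = dl x y.
Proof. by rewrite rmorph_nat. Qed.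

Lemma qform (s al : C) a b (X : 'M[C]_p) :
  \sum_x \sum_y ((s *: vec a al b) x 0)^* * X x y * (s *: vec a al b) y 0 =
  s^* * s * (X a a + al * X a b + al^* * X b a + al^* * al * X b b).
Proof.
under eq_bigr => x _ do under eq_bigr => y _ do rewrite !mxE !(rmorphM, rmorphD, rmorph_nat).
rewrite (eq_bigr (fun x => s^* * (dl x a * (\sum_y X x y * s * (dl y a + al * dl y b)))
   + s^* * al^* * (dl x b * (\sum_y X x y * s * (dl y a + al * dl y b))))); last first.
  move=> x _; rewrite !mulr_sumr -big_split /=; apply: eq_bigr => y _; ring.
rewrite big_split /= -!mulr_sumr !sum_dl.
rewrite (eq_bigr (fun y => s * (X a y * dl y a) + s * al * (X a y * dl y b))); last by move=> y _; ring.
rewrite big_split /= -!mulr_sumr !sum_dl'.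
rewrite (eq_bigr (fun y => s * (X b y * dl y a) + s * al * (X b y * dl y b))); last by move=> y _; ring.
rewrite big_split /= -!mulr_sumr !sum_dl'.
ring.
Qed.

Lemma four (Paa Pab Pba Pbb ia ib ja jb : C) :
  let f al be := (Paa + al * Pab + be * Pba + be * al * Pbb) * ((ia + al * ib) * (ja + be * jb)) in
  f 1 1 + f 'i (- 'i) + f (-1) (-1) + f (- 'i) 'i =
  4 * ((Paa + Pbb) * (ia * ja + ib * jb) + Pab * ia * jb + Pba * ib * ja).
Proof.
move=> f; set z := 'i.
have hz : z * z = -1 by rewrite /z mulCii.
have E : f z (-z) + f (-z) z = 2 * ((Paa - (z*z)*Pbb)*(ia*ja - (z*z)*ib*jb)
          + (z*z)*(Pab-Pba)*(ib*ja - ia*jb)).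
  rewrite /f; ring.
have -> : f 1 1 + f z (- z) + f (-1) (-1) + f (- z) z = f 1 1 + f (-1) (-1) + (f z (-z) + f (-z) z) by ring.
rewrite E hz /f; ring.
Qed.

Lemma sqrt_norm (l : C) : 0 <= l -> (sqrtC l)^* * sqrtC l = l.
Proof. by move=> hl; rewrite geC0_conj ?sqrtC_ge0 // -expr2 sqrtCK. Qed.

Definition alpha (k : 'I_5) : C :=
  match nat_of_ord k with O => 1 | S O => 'i | S (S O) => -1 | _ => - 'i end.

Definition wv (l1 l2 : C) a b (k : 'I_5) : 'cV[C]_p :=
  if (k < 4)%N then sqrtC l1 *: vec a (alpha k) b else sqrtC l2 *: vec a 0 a.
Definition vv a b (k : 'I_5) : 'cV[C]_p :=
  if (k < 4)%N then vec a (alpha k) b else vec b 0 b.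

Lemma pair_sum (l1 l2 : C) a b (X : 'M[C]_p) i j : 0 <= l1 -> 0 <= l2 ->
  \sum_(k < 5) (vv a b k *m adjmx (wv l1 l2 a b k) *m X *m wv l1 l2 a b k *m adjmx (vv a b k)) i j =
  l1 * 4 * ((X a a + X b b) * (dl i a * dl j a + dl i b * dl j b) + X a b * dl i a * dl j b
            + X b a * dl i b * dl j a) + l2 * X a a * (dl i b * dl j b).
Proof.
move=> h1 h2.
under eq_bigr => k _ do rewrite term_entry.
rewrite !big_ord_recl big_ord0 /wv /vv /=.
rewrite !qform !sqrt_norm // /alpha /=.
rewrite !mxE !(rmorphM, rmorphD, rmorph_nat, rmorphN, rmorph1, conjCi, opprK, rmorph0).
have := four (X a a) (X a b) (X b a) (X b b) (dl i a) (dl i b) (dl j a) (dl j b).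
rewrite (_ : Num.Num_conj__canonical__GRing_RMorphism C 'i = - 'i); last exact: conjCi.
move=> /= E; rewrite -[l1 * 4 * _]mulrA -E.
ring.
Qed.

Lemma L1 (f : 'I_p -> 'I_p -> C) i j :
  \sum_a \sum_b f a b * dl i a * dl j a = dl i j * \sum_b f i b.
Proof.
rewrite (eq_bigr (fun a => dl a i * ((\sum_b f a b) * dl j a))).
  by rewrite sum_dl eq_sym mulrC.
move=> a _; rewrite mulr_suml mulr_sumr; apply: eq_bigr => b _; rewrite eq_sym; ring.
Qed.

Lemma L2 (f : 'I_p -> 'I_p -> C) i j :
  \sum_a \sum_b f a b * dl i b * dl j b = dl i j * \sum_a f a i.
Proof.
rewrite exchange_big /=.
rewrite (eq_bigr (fun b => dl b i * ((\sum_a f a b) * dl j b))).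
  by rewrite sum_dl eq_sym mulrC.
move=> b _; rewrite mulr_suml mulr_sumr; apply: eq_bigr => a _; rewrite eq_sym; ring.
Qed.

Lemma L3 (f : 'I_p -> 'I_p -> C) i j :
  \sum_a \sum_b f a b * dl i a * dl j b = f i j.
Proof.
rewrite (eq_bigr (fun a => dl a i * (\sum_b dl b j * f a b))).
  by rewrite sum_dl sum_dl.
move=> a _; rewrite mulr_sumr; apply: eq_bigr => b _; rewrite (eq_sym a i) (eq_sym b j); ring.
Qed.

Lemma L4 (f : 'I_p -> 'I_p -> C) i j :
  \sum_a \sum_b f a b * dl i b * dl j a = f j i.
Proof.
rewrite (eq_bigr (fun a => dl a j * (\sum_b dl b i * f a b))).
  by rewrite sum_dl sum_dl.
move=> a _; rewrite mulr_sumr; apply: eq_bigr => b _; rewrite (eq_sym a j) (eq_sym b i); ring.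
Qed.
End S.

Theorem mainTheorem10 (C : numClosedFieldType) (p : nat) (A : 'M[C]_p) :
  adjacency_matrix A ->
  entanglement_breaking (gammamap A (p * maxdegree A)%:R).
Proof.
case=> h01 hsym hdiag.
set d := maxdegree A.
have symA a b : A b a = A a b.
  have := congr1 (fun M : 'M[C]_p => M a b) hsym; rewrite /adjmx !mxE => <-.
  by case: (h01 b a) => ->; rewrite ?rmorph0 ?rmorph1.
have degE a : (vdegree A a)%:R = \sum_x A a x.
  rewrite /vdegree -sum1_card natr_sum big_mkcond /=; apply: eq_bigr => x _.
  by rewrite inE; case: (h01 a x) => ->; rewrite ?eqxx // eq_sym oner_eq0.
pose l1 a b := A a b / 8.
pose l2 a b := d%:R - A a b - ((a == b)%:R : C) * \sum_x A a x.
have hl1 a b : 0 <= l1 a b.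
  by rewrite /l1; case: (h01 a b) => ->; rewrite ?mul0r // mul1r invr_ge0 ler0n.
have hl2 a b : 0 <= l2 a b.
  rewrite /l2; case: (eqVneq a b) => [<-|hab].
    rewrite hdiag subr0 mul1r -degE subr_ge0 ler_nat; exact: leq_bigmax.
  rewrite mul0r subr0; case: (h01 a b) => hA; rewrite hA ?subr0 ?ler0n //.
  rewrite subr_ge0 ler1n (leq_trans _ (leq_bigmax a)) // /vdegree card_gt0.
  by apply/set0Pn; exists b; rewrite inE hA.
pose T := (('I_p * 'I_p) * 'I_5)%type.
pose V (t : T) := @vv C p t.1.1 t.1.2 t.2.
pose W (t : T) := @wv C p (l1 t.1.1 t.1.2) (l2 t.1.1 t.1.2) t.1.1 t.1.2 t.2.
exists #|{: T}|, (fun k => V (enum_val k)), (fun k => W (enum_val k)) => X.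
apply/matrixP => i j; rewrite summxE.
rewrite -(big_enum_val (fun t : T => (V t *m adjmx (W t) *m X *m W t *m adjmx (V t)) i j)).
rewrite -(pair_bigA _ (fun ab k => (V (ab, k) *m adjmx (W (ab,k)) *m X *m W (ab,k) *m adjmx (V (ab,k))) i j)) /=.
rewrite -(pair_bigA _ (fun a b => \sum_k (V ((a,b), k) *m adjmx (W ((a,b),k)) *m X *m W ((a,b),k) *m adjmx (V ((a,b),k))) i j)) /=.
rewrite /V /W /=.
under eq_bigr => a _ do under eq_bigr => b _ do rewrite pair_sum //.
pose dl (x y : 'I_p) : C := (x == y)%:R.
rewrite (eq_bigr (fun a => \sum_b ((l1 a b * 4 * (X a a + X b b)) * dl i a * dl j a
   + (l1 a b * 4 * (X a a + X b b) + l2 a b * X a a) * dl i b * dl j b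
   + (l1 a b * 4 * X a b) * dl i a * dl j b + (l1 a b * 4 * X b a) * dl i b * dl j a))); last first.
  by move=> a _; apply: eq_bigr => b _; rewrite /dl; ring.
rewrite (eq_bigr (fun a => \sum_b ((l1 a b * 4 * (X a a + X b b)) * dl i a * dl j a)
   + \sum_b ((l1 a b * 4 * (X a a + X b b) + l2 a b * X a a) * dl i b * dl j b)
   + \sum_b ((l1 a b * 4 * X a b) * dl i a * dl j b) + \sum_b ((l1 a b * 4 * X b a) * dl i b * dl j a))); last first.
  by move=> a _; rewrite !big_split.
rewrite !big_split /=.
rewrite /dl L1 L2 L3 L4.
have hp : (p%:R : C) != 0.
  by rewrite pnatr_eq0 -lt0n (leq_ltn_trans (leq0n i) (ltn_ord i)).
have h8 : (8 : C) != 0 by rewrite pnatr_eq0.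
have E1 : \sum_b l1 i b * 4 * (X i i + X b b) =
    X i i * (\sum_b A i b) * (4/8) + (\sum_b A i b * X b b) * (4/8).
  rewrite mulr_sumr !mulr_suml -big_split /=; apply: eq_bigr => b _; rewrite /l1 /=; ring.
have E2 : \sum_a (l1 a i * 4 * (X a a + X i i) + l2 a i * X a a) =
    d%:R * (\sum_a X a a) - (\sum_a A i a * X a a) * (4/8) + X i i * (\sum_a A i a) * (4/8)
     - (\sum_x A i x) * X i i.
  rewrite (eq_bigr (fun a => d%:R * X a a - (A i a * X a a) * (4/8) + X i i * A i a * (4/8)
     - dl a i * ((\sum_x A a x) * X a a))); last first.
    move=> a _; rewrite /l1 /l2 /dl (symA a i); move: (\sum_x A a x) => s; move: (d%:R : C) => dd; by field.
  rewrite sumrB big_split sumrB /=.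
  congr (_ - _ + _ - _).
  - by rewrite mulr_sumr.
  - by rewrite mulr_suml.
  - by rewrite -mulr_suml -mulr_sumr.
  - by rewrite /dl sum_dl.
rewrite E1 E2.
rewrite /l1 (symA i j).
rewrite /gammamap /deltamap /ntr /schur !mxE mulr_natr natrM.
rewrite /mxtrace.
rewrite -(mulr_natr (_ / p%:R)) -(mulr_natr (A i j / 8)).
move: (\sum_a X a a) (\sum_a A i a) (\sum_b A i b * X b b) => s1 s2 s3.
by field.
Qed.
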